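(* Let $r:E\to\mathbb R$ be continuous, bounded and non-negative, $\alpha_t=\int_0^t r(X_u)du$, and $q_r(x)=\limsup_{T\to\infty}\mathbb E^x\{\int_0^Te^{-\alpha_s}(f(X_s)-\mu(f))ds\}$. Assume (C1') $q_r$ is continuous and bounded from below; (C2') for every bounded stopping time $\sigma$ and every $x$, $q_r(x)=\mathbb E^x\{\int_0^\sigma e^{-\alpha_s}(f(X_s)-\mu(f))ds+e^{-\alpha_\sigma}q_r(X_\sigma)\}$; (C3) $\mu(f)<0$. Then for any choice of $d(x)\in(\mu(f),0)$, $$\gamma_r(x)=\sup_\tau\limsup_{T\to\infty}\mathbb E^x\Big\{\int_0^{\tau\wedge T}e^{-\alpha_s}\big(f(X_s)-d(x)\big)ds\Big\}<\infty,$$ and moreover $\gamma_r(x)\le q_r(x)-A$, where $A=\min(0,\inf_yq_r(y))$.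
   Context: $E$ is a locally compact separable metric space in which every closed ball is compact. $(X_t)$ is a right-continuous time-homogeneous (standard) Markov process on $E$ with laws $\mathbb P^x$, expectations $\mathbb E^x$, satisfying the weak Feller property and ergodicity (a unique probability measure $\mu$ with $\|P_t(x,\cdot)-\mu\|_{TV}\to0$ for all $x$); $\mu(f)=\int f\,d\mu$. $f,g$ are continuous and bounded. Stopping times may be infinite. *)

(* Defs.v *)
From HB Require Import structures.
From mathcomp Require Import all_boot all_order all_algebra.
From mathcomp Require Import all_classical all_reals all_analysis.
From mathcomp Require Import measurable_realfun.
Set Implicit Arguments. Unset Strict Implicit. Unset Printing Implicit Defensive.
Import Order.TTheory GRing.Theory Num.Theory.
Import numFieldNormedType.Exports.
Local Open Scope classical_set_scope.
Local Open Scope ring_scope.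

(* A metric space with a distinguished point (E is nonempty in the paper,
   since it carries the probability measure mu); the point is only needed to
   build the Borel measurable type on E. *)
#[short(type="pmetricType")]
HB.structure Definition PointedMetric (K : numDomainType) :=
  { M of Pointed M & Metric K M }.

Definition borel {E : ptopologicalType} : set (set E) := <<s @open E >>.
Definition borelT (E : ptopologicalType) := g_sigma_algebraType (@open E).

Definition separable (E : topologicalType) :=
  exists D : set E, countable D /\ dense D.
Definition closed_balls_compact {R : realType} (E : pmetricType R) :=
  forall (x : E) (e : R), compact [set y | mdist x y <= e].

Definition bdd {T : Type} {R : realType} (h : T -> R) :=
  exists M : R, forall y, `|h y| <= M.

Definition borel_fun {R : realType} {E : ptopologicalType} (h : E -> R) :=
  forall B : set R, measurable B -> borel (h @^-1` B).

Section defs.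
Context {R : realType} {E : pmetricType R} {d : measure_display}
  {Om : measurableType d}.

Definition Ex (P : probability Om R) (Y : Om -> R) : \bar R :=
  (\int[P]_w (Y w)%:E)%E.

Definition filtration (F : R -> set (set Om)) :=
  [/\ forall t, sigma_algebra setT (F t),
      forall t, F t `<=` measurable &
      forall s t, s <= t -> F s `<=` F t].

Definition right_continuous_filtration (F : R -> set (set Om)) :=
  forall t, 0 <= t -> F t = [set A | forall s, t < s -> F s A].

Definition stopping_time (F : R -> set (set Om)) : set (Om -> \bar R) :=
  [set tau | (forall w, (0 <= tau w)%E) /\
     forall t, 0 <= t -> F t [set w | (tau w <= t%:E)%E]].

Definition F_infty (F : R -> set (set Om)) : set (set Om) :=
  <<s \bigcup_(t in [set t : R | 0 <= t]) F t >>.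

Definition F_at (F : R -> set (set Om)) (tau : Om -> \bar R) : set (set Om) :=
  [set A | F_infty F A /\
     forall t, 0 <= t -> F t (A `&` [set w | (tau w <= t%:E)%E])].

(* X_tau (only meaningful on {tau < +oo}) *)
Definition Xat (X : R -> Om -> E) (tau : Om -> \bar R) (w : Om) : E :=
  X (fine (tau w)) w.

Definition Pf (X : R -> Om -> E) (P : E -> probability Om R) (t : R)
  (h : E -> R) (x : E) : R := fine (Ex (P x) (h \o X t)).

Definition standard_markov (F : R -> set (set Om)) (X : R -> Om -> E)
  (P : E -> probability Om R) :=
  filtration F /\ right_continuous_filtration F /\
   (forall t, 0 <= t -> forall B, borel B -> F t (X t @^-1` B)) /\
   (forall w t, 0 <= t -> X s w @[s --> t^'+] --> X t w) /\
   (forall x, P x [set w | X 0 w = x] = 1%E) /\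
   (forall (t : R) (B : set E), 0 <= t -> borel B ->
     forall C : set (\bar R), measurable C ->
     borel ((fun x => P x (X t @^-1` B)) @^-1` C)) /\
   (forall x s t A h, 0 <= s -> 0 <= t -> F t A -> borel_fun h -> bdd h ->
     Ex (P x) (fun w => \1_A w * h (X (t + s) w)) =
     Ex (P x) (fun w => \1_A w * Pf X P s h (X t w))) /\
   (forall x s tau A h, 0 <= s -> stopping_time F tau -> F_at F tau A ->
     borel_fun h -> bdd h ->
     Ex (P x) (fun w => \1_(A `&` [set w | (tau w < +oo)%E]) w *
                         h (X (fine (tau w) + s) w)) =
     Ex (P x) (fun w => \1_(A `&` [set w | (tau w < +oo)%E]) w *
                         Pf X P s h (Xat X tau w))) /\
   (forall x (tn : nat -> Om -> \bar R) tau,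
     (forall n, stopping_time F (tn n)) -> stopping_time F tau ->
     (forall w, {homo (fun n => tn n w) : m n / (m <= n)%N >-> (m <= n)%E}) ->
     (forall w, tn n w @[n --> \oo] --> tau w) ->
     P x [set w | (tau w < +oo)%E /\ Xat X (tn n) w @[n --> \oo] --> Xat X tau w]
     = P x [set w | (tau w < +oo)%E]).

Definition weak_feller (X : R -> Om -> E) (P : E -> probability Om R) :=
  forall t h, 0 <= t -> continuous h -> bdd h -> continuous (Pf X P t h).

Definition TVdist (nu1 nu2 : set E -> \bar R) : \bar R :=
  ereal_sup [set `|(nu1 B - nu2 B)%E|%E | B in @borel E].

Definition ergodic (X : R -> Om -> E) (P : E -> probability Om R)
  (mu : probability (borelT E) R) :=
  forall x, TVdist (fun B => P x (X t @^-1` B)) (mu : set E -> \bar R)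
              @[t --> +oo] --> 0%E.

Definition mu_of (mu : probability (borelT E) R) (f : E -> R) : R :=
  fine (\int[mu]_y (f y)%:E)%E.

Definition alpha (X : R -> Om -> E) (r : E -> R) (t : R) (w : Om) : R :=
  Rintegral lebesgue_measure `[0, t] (fun u => r (X u w)).

Definition disc_int (X : R -> Om -> E) (r g : E -> R) (t : R) (w : Om) : R :=
  Rintegral lebesgue_measure `[0, t]
    (fun s => expR (- alpha X r s w) * g (X s w)).

Definition q_r (X : R -> Om -> E) (P : E -> probability Om R)
  (mu : probability (borelT E) R) (r f : E -> R) (x : E) : \bar R :=
  limf_esup (fun T => Ex (P x) (disc_int X r (fun y => f y - mu_of mu f) T))
    (pinfty_nbhs R).

Definition gamma_r (F : R -> set (set Om)) (X : R -> Om -> E)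
  (P : E -> probability Om R) (r f : E -> R) (dx : R) (x : E) : \bar R :=
  ereal_sup [set limf_esup (fun T => Ex (P x) (fun w =>
        disc_int X r (fun y => f y - dx) (fine (Order.min (tau w) T%:E)) w))
      (pinfty_nbhs R) | tau in stopping_time F].

End defs.

(* Main.v *)
Require Import Defs.
From HB Require Import structures.
From mathcomp Require Import all_boot all_order all_algebra.
From mathcomp Require Import all_classical all_reals all_analysis.
From mathcomp Require Import measurable_realfun.
Import Order.TTheory GRing.Theory Num.Theory.
Import numFieldNormedType.Exports.
Local Open Scope classical_set_scope.
Local Open Scope ring_scope.
Section intlemmas.
Local Open Scope ereal_scope.
Context d (T : measurableType d) (R : realType) (mu : {measure set T -> \bar R}).
Import HBNNSimple.

Lemma nn_mono (f g : T -> \bar R) : (forall x, 0 <= f x) -> (forall x, f x <= g x) ->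
  \int[mu]_x f x <= \int[mu]_x g x.
Proof.
move=> f0 fg.
have g0 : forall x, 0 <= g x by move=> x; exact: le_trans (f0 x) (fg x).
rewrite (ge0_integralTE mu f0) (ge0_integralTE mu g0) /=.
apply: ereal_sup_le => _ [h hf <-]; exists h => //= x.
exact: le_trans (hf x) (fg x).
Qed.

Lemma gen_mono (f g : T -> \bar R) : (forall x, f x <= g x) ->
  \int[mu]_x f x <= \int[mu]_x g x.
Proof.
move=> fg; rewrite (integralE _ _ f) (integralE _ _ g).
apply: leeB; apply: nn_mono.
- by move=> x; exact: funepos_ge0.
- by move=> x; rewrite !funeposE; apply: le_max2.
- by move=> x; exact: funeneg_ge0.
- by move=> x; rewrite !funenegE; apply: le_max2 => //; rewrite leeN2.
Qed.

End intlemmas.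
Section shiftsec.
Context d (T : measurableType d) (R : realType).
Import HBNNSimple.
Variables (s : {nnsfun T >-> R}) (c : R).
Definition shiftf : T -> R := (fun y => Num.max (y - c) 0) \o s.
HB.instance Definition _ := FImFun.copy shiftf ((fun y => Num.max (y - c) 0) \o s).
Lemma shiftf_meas : measurable_fun setT shiftf.
Proof.
apply: (@measurable_maxr _ _ _ _ (fun x => s x - c) (cst 0)).
  by apply: measurable_funB => //; exact: measurable_cst.
exact: measurable_cst.
Qed.
HB.instance Definition _ := isMeasurableFun.Build _ _ _ _ shiftf shiftf_meas.
Lemma shiftf_ge0 x : 0 <= shiftf x.
Proof. by rewrite /shiftf /= le_max lexx orbT. Qed.
HB.instance Definition _ := isNonNegFun.Build _ _ shiftf shiftf_ge0.
Definition shift_nnsfun : {nnsfun T >-> R} := shiftf.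
End shiftsec.
Section shiftint.
Local Open Scope ereal_scope.
Context d (T : measurableType d) (R : realType) (mu : {measure set T -> \bar R}).
Import HBNNSimple.

Lemma nn_shift (u : T -> \bar R) (c : R) : (forall x, 0 <= u x) -> (0 <= c)%R ->
  \int[mu]_x (u x + c%:E) <= \int[mu]_x u x + c%:E * mu setT.
Proof.
move=> u0 c0.
have uc0 : forall x, 0 <= u x + c%:E by move=> x; rewrite adde_ge0.
rewrite (ge0_integralTE mu uc0) (ge0_integralTE mu u0) /=.
apply: ge_ereal_sup => _ [h hh <-].
pose h' := @shift_nnsfun _ _ _ h c.
have -> : sintegral mu h = \int[mu]_x (h x)%:E.
  by rewrite (integral_nnsfun mu measurableT) patch_setT.
apply: (@le_trans _ _ (\int[mu]_x ((h' x)%:E + (cst c%:E) x))).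
  apply: nn_mono => x; first by rewrite lee_fin.
  rewrite /h' /= /shiftf /= -EFinD lee_fin.
  by rewrite -lerBlDr le_max lexx.
rewrite ge0_integralD //; last 2 first.
- by move=> x _; rewrite lee_fin.
- by apply/measurable_EFinP; exact: measurable_funP.
rewrite integral_cst //; apply: leeD2r.
rewrite (integral_nnsfun mu measurableT) patch_setT.
apply: ereal_sup_ubound; exists h' => // x.
rewrite /h' /= /shiftf /=.

case: (lerP (h x - c) 0) => hc; first by [].
by rewrite EFinB leeBlDr //; exact: hh.
Qed.
End shiftint.
From mathcomp Require Import lra.
Lemma real_aux (R : realType) (g c s t : R) : 0 <= c -> 0 <= s -> 0 <= t ->
  s <= Num.max (g + c) 0 -> t <= Num.max (- g) 0 ->
  Num.max (Num.min s c) 0 + Num.max (Num.min t c) 0 <= c.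
Proof.
case: (lerP (g + c) 0) => h1; case: (lerP (-g) 0) => h2;
case: (lerP s c) => h3; case: (lerP t c) => h4; move=> *.
all: try (case: (lerP s 0) => h5); try (case: (lerP t 0) => h6).
all: try (case: (lerP c 0) => h7).
all: lra.
Qed.
Lemma maxe0E (R : realType) (r : R) : Order.max r%:E 0%E = (Num.max r 0)%:E.
Proof. by rewrite EFin_max. Qed.
Lemma R1 (R : realType) (c s : R) : 0 <= c -> 0 <= s ->
  s = Num.max (s - c) 0 + Num.max (Num.min s c) 0.
Proof.
case: (lerP (s - c) 0) => h1; case: (lerP s c) => h2;
 try (case: (lerP s 0) => h5); try (case: (lerP c 0) => h6); move=> *; lra.
Qed.
Lemma R2 (R : realType) (g c s : R) : 0 <= c -> s <= Num.max (g + c) 0 ->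
  Num.max (s - c) 0 <= Num.max g 0.
Proof.
case: (lerP (s - c) 0) => h1; case: (lerP (g + c) 0) => h2;
 case: (lerP g 0) => h3; move=> *; lra.
Qed.
Lemma R3 (R : realType) (g c t : R) : 0 <= c -> t <= Num.max (- g) 0 ->
  Num.max (t - c) 0 <= Num.max (- (g + c)) 0.
Proof.
case: (lerP (t - c) 0) => h1; case: (lerP (- (g + c)) 0) => h2;
 case: (lerP (- g) 0) => h3; move=> *; lra.
Qed.
Lemma R4 (R : realType) (g c : R) : 0 <= c ->
  Num.max (- g) 0 <= Num.max (- (g + c)) 0 + c.
Proof.
case: (lerP (- (g + c)) 0) => h2; case: (lerP (- g) 0) => h3; move=> *; lra.
Qed.
Lemma ereal_arith2 (R : realType) (a a' b b' : \bar R) (c : R) :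
  (0 <= a)%E -> (0 <= a')%E -> (0 <= b)%E -> (0 <= b')%E -> 0 <= c ->
  (b <= b' + c%:E)%E -> (a' + b <= a + b' + c%:E)%E -> (a' - b' <= a - b + c%:E)%E.
Proof.
move: a a' b b' => [a||] [a'||] [b||] [b'||] //=.
all: rewrite ?lee_fin.
- by move=> *; lra.
- by move=> *; rewrite addeNy leNye.
- by move=> *; rewrite addeNy leNye.
- by move=> *; apply: (le_trans (leey _)); rewrite le_eqVlt eqxx.
Qed.
Section compsec.
Context d (T : measurableType d) (R : realType).
Import HBNNSimple.
Variables (s : {nnsfun T >-> R}) (phi : R -> R) (phim : measurable_fun setT phi)
  (phi0 : forall y, 0 <= phi y).
Definition compf : T -> R := phi \o s.
HB.instance Definition _ := FImFun.copy compf (phi \o s).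
Lemma compf_meas : measurable_fun setT compf.
Proof. exact: measurableT_comp. Qed.
HB.instance Definition _ := isMeasurableFun.Build _ _ _ _ compf compf_meas.
Lemma compf_ge0 x : 0 <= compf x.
Proof. exact: phi0. Qed.
HB.instance Definition _ := isNonNegFun.Build _ _ compf compf_ge0.
Definition comp_nnsfun : {nnsfun T >-> R} := compf.
End compsec.

Lemma sup_add_le (R : realType) (S U : set \bar R) (k : R) x0 y0 :
  S x0 -> U y0 -> (forall x, S x -> 0 <= x)%E -> (forall y, U y -> 0 <= y)%E ->
  (forall x y, S x -> U y -> x + y <= k%:E)%E ->
  (ereal_sup S + ereal_sup U <= k%:E)%E.
Proof.
move=> Sx0 Uy0 S0 U0 H.
have yfin y : U y -> (y \is a fin_num).
  move=> Uy; rewrite fin_numE; apply/andP; split.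
    by rewrite gt_eqF // (lt_le_trans _ (U0 _ Uy)) // ltNy0.
  rewrite lt_eqF //; apply: (le_lt_trans (y := k%:E)); last exact: ltey.
  by apply: le_trans (H _ _ Sx0 Uy); rewrite leeDr // S0.
have h1 y : U y -> (ereal_sup S <= k%:E - y)%E.
  move=> Uy; apply: ge_ereal_sup => x Sx; rewrite leeBrDr ?yfin //; exact: H.
have supfin : ereal_sup S \is a fin_num.
  rewrite fin_numE; apply/andP; split.
    by rewrite gt_eqF // (lt_le_trans _ (ereal_sup_ubound Sx0)) // (lt_le_trans _ (S0 _ Sx0)) // ltNy0.
  rewrite lt_eqF //; apply: (le_lt_trans (h1 _ Uy0)).
  by rewrite -(fineK (yfin _ Uy0)) -EFinB ltey.
rewrite -leeBrDl //; apply: ge_ereal_sup => y Uy.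
by rewrite leeBrDl // -leeBrDr ?yfin // h1.
Qed.
Section intshift.
Local Open Scope ereal_scope.
Import HBNNSimple.

Lemma int_shift d (T : measurableType d) (R : realType) (mu : probability T R)
  (g : T -> R) (c : R) : (0 <= c)%R ->
  \int[mu]_x (g x + c)%:E <= \int[mu]_x (g x)%:E + c%:E.
Proof.
move=> c0.
set G := fun x => (g x)%:E; set G' := fun x => (g x + c)%:E.
rewrite (integralE _ _ G') (integralE _ _ G).
have Pge0 F : 0 <= \int[mu]_x F^\+ x.
  by apply: integral_ge0 => x _; exact: funepos_ge0.
have Nge0 F : 0 <= \int[mu]_x F^\- x.
  by apply: integral_ge0 => x _; exact: funeneg_ge0.
have Gp x : G^\+ x = (Num.max (g x) 0)%:E by rewrite funeposE maxe0E.
have Gn x : G^\- x = (Num.max (- g x) 0)%:E by rewrite funenegE -EFinN maxe0E.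
have G'p x : G'^\+ x = (Num.max (g x + c) 0)%:E by rewrite funeposE maxe0E.
have G'n x : G'^\- x = (Num.max (- (g x + c)) 0)%:E by rewrite funenegE -EFinN maxe0E.
apply: ereal_arith2 => //.
  apply: (le_trans (@nn_mono _ _ _ mu _ (fun x => G'^\- x + c%:E) _ _)).
  - by move=> x; exact: funeneg_ge0.
  - by move=> x; rewrite Gn G'n -EFinD lee_fin R4.
  apply: le_trans (@nn_shift _ _ _ mu _ c _ c0) _.
    by move=> x; exact: funeneg_ge0.
  apply: leeD2l; rewrite le_eqVlt; apply/orP; left; apply/eqP.
  rewrite -[RHS]mule1; congr (_ * _); exact: probability_setT.
have claim : forall s t : {nnsfun T >-> R},
    (forall x, (s x)%:E <= G'^\+ x) -> (forall x, (t x)%:E <= G^\- x) ->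
    sintegral mu s + sintegral mu t <=
    \int[mu]_x G^\+ x + \int[mu]_x G'^\- x + c%:E.
  move=> s t hs ht.
  have hs' x : (s x <= Num.max (g x + c) 0)%R by rewrite -lee_fin -G'p.
  have ht' x : (t x <= Num.max (- g x) 0)%R by rewrite -lee_fin -Gn.
  pose phi1 := fun y : R => (Num.max (y - c) 0)%R.
  have phi1m : measurable_fun setT phi1.
    apply: continuous_measurable_fun.
    apply: (@max_fun_continuous _ _ _ (fun y => y - c)%R (cst 0%R)).
      by move=> y; apply: cvgB; [exact: cvg_id | exact: cvg_cst].
    exact: cst_continuous.
  have phi10 y : (0 <= phi1 y)%R by rewrite /phi1 le_max lexx orbT.
  pose phi2 := fun y : R => (Num.max (Num.min y c) 0)%R.
  have phi2m : measurable_fun setT phi2.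
    apply: continuous_measurable_fun.
    apply: (@max_fun_continuous _ _ _ (fun y => Num.min y c)%R (cst 0%R)).
      apply: (@min_fun_continuous _ _ _ id (cst c)).
        by move=> y; exact: cvg_id.
      exact: cst_continuous.
    exact: cst_continuous.
  have phi20 y : (0 <= phi2 y)%R by rewrite /phi2 le_max lexx orbT.
  pose u1 := @comp_nnsfun _ _ _ s phi1 phi1m phi10.
  pose m1 := @comp_nnsfun _ _ _ s phi2 phi2m phi20.
  pose u2 := @comp_nnsfun _ _ _ t phi1 phi1m phi10.
  pose m2 := @comp_nnsfun _ _ _ t phi2 phi2m phi20.
  have es : sintegral mu s = sintegral mu u1 + sintegral mu m1.
    rewrite -sintegralD; apply: eq_sintegral => x.
    by rewrite /= /compf /= /phi1 /phi2 -R1 // fun_ge0.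
  have et : sintegral mu t = sintegral mu u2 + sintegral mu m2.
    rewrite -sintegralD; apply: eq_sintegral => x.
    by rewrite /= /compf /= /phi1 /phi2 -R1 // fun_ge0.
  have h1 : sintegral mu u1 <= \int[mu]_x G^\+ x.
    rewrite (ge0_integralTE mu (funepos_ge0 G)); apply: ereal_sup_ubound.
    exists u1 => // x; rewrite Gp lee_fin /= /compf /= /phi1; exact: R2.
  have h2 : sintegral mu u2 <= \int[mu]_x G'^\- x.
    rewrite (ge0_integralTE mu (funeneg_ge0 G')); apply: ereal_sup_ubound.
    exists u2 => // x; rewrite G'n lee_fin /= /compf /= /phi1; exact: R3.
  have h3 : sintegral mu m1 + sintegral mu m2 <= c%:E.
    pose k := @comp_nnsfun _ _ _ s (fun _ => c) (@measurable_cst _ _ R R setT c) (fun _ => c0).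
    rewrite -sintegralD; apply: (@le_trans _ _ (sintegral mu k)).
      apply: (@le_sintegral _ _ _ mu (add_nnsfun m1 m2) k) => x.
      rewrite /= /compf /= /phi2; by apply: real_aux.
    rewrite -[sintegral mu k]/(sintegral mu (HBNNSimple.NonNegSimpleFun.sort k)).
    rewrite -(patch_setT (fun _ => 0%R) (HBNNSimple.NonNegSimpleFun.sort k)).
    rewrite -(integral_nnsfun mu measurableT).
    rewrite (integral_cst mu measurableT c%:E).
    rewrite le_eqVlt; apply/orP; left; apply/eqP.
    rewrite -[RHS]mule1; congr (_ * _); exact: probability_setT.
  rewrite es et addeACA; apply: leeD => //; exact: leeD.
have Kge0 : 0 <= \int[mu]_x G^\+ x + \int[mu]_x G'^\- x + c%:E.
  by apply: adde_ge0 => //; apply: adde_ge0.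
rewrite (ge0_integralTE mu (funepos_ge0 G')) (ge0_integralTE mu (funeneg_ge0 G)).
move: claim Kge0.
set K := (\int[mu]_x G^\+ x + \int[mu]_x G'^\- x + c%:E).
case: K => [k||] claim Kge0.
- apply: (@sup_add_le _ _ _ k (sintegral mu (@nnsfun0 _ T R)) (sintegral mu (@nnsfun0 _ T R))).
  + by exists nnsfun0 => // x; exact: funepos_ge0.
  + by exists nnsfun0 => // x; exact: funeneg_ge0.
  + by move=> _ [h _ <-]; exact: sintegral_ge0.
  + by move=> _ [h _ <-]; exact: sintegral_ge0.
  + by move=> _ _ [s hs <-] [t ht <-]; exact: claim.
- exact: leey.
- by [].
Qed.
End intshift.
Lemma int_bdd_fin d (T : measurableType d) (R : realType)
  (mu : {measure set T -> \bar R}) (D : set T) (h : T -> R) (M : R) :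
  measurable D -> (mu D < +oo)%E -> (forall x, D x -> `|h x| <= M) ->
  (\int[mu]_(x in D) (h x)%:E)%E \is a fin_num.
Proof.
move=> mD muD hM.
have muDf : mu D \is a fin_num by rewrite ge0_fin_numE.
have cstfin : (\int[mu]_(y in D) (cst M%:E) y < +oo)%E.
  by rewrite integral_cst // -(fineK muDf) -EFinM ltey.
set G := fun x => (h x)%:E.
have Gp x : (G^\+ x = (Num.max (h x) 0)%:E)%E by rewrite funeposE maxe0E.
have Gn x : (G^\- x = (Num.max (- h x) 0)%:E)%E by rewrite funenegE -EFinN maxe0E.
rewrite (integralE _ _ G) fin_numB; apply/andP; split.
- rewrite ge0_fin_numE; last by apply: integral_ge0 => y _; exact: funepos_ge0.
  apply: le_lt_trans cstfin.
  rewrite (integral_mkcond D) [X in (_ <= X)%E](integral_mkcond D).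
  apply: nn_mono => y; rewrite /patch; case: ifP => [/set_mem Dy|_] //.
  rewrite Gp lee_fin ge_max; apply/andP; split.
    exact: le_trans (ler_norm _) (hM _ Dy).
  exact: le_trans (normr_ge0 _) (hM _ Dy).
- rewrite ge0_fin_numE; last by apply: integral_ge0 => y _; exact: funeneg_ge0.
  apply: le_lt_trans cstfin.
  rewrite (integral_mkcond D) [X in (_ <= X)%E](integral_mkcond D).
  apply: nn_mono => y; rewrite /patch; case: ifP => [/set_mem Dy|_] //.
  rewrite Gn lee_fin ge_max; apply/andP; split.
    by apply: le_trans (hM _ Dy); rewrite -normrN ler_norm.
  exact: le_trans (normr_ge0 _) (hM _ Dy).
Qed.

Lemma alpha_ge0 (R : realType) (E : pmetricType R) d (Om : measurableType d)
  (X : R -> Om -> E) (r : E -> R) (r0 : forall y, 0 <= r y) t w :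
  0 <= alpha X r t w.
Proof.
rewrite /alpha /Rintegral; apply: fine_ge0; apply: integral_ge0 => u _.
by rewrite lee_fin.
Qed.

Lemma disc_mono (R : realType) (E : pmetricType R) d (Om : measurableType d)
  (X : R -> Om -> E) (r f : E -> R) (r0 : forall y, 0 <= r y) (fb : R)
  (hf : forall y, `|f y| <= fb) (c1 c2 : R) (t : R) (w : Om) : c2 <= c1 ->
  disc_int X r (fun y => f y - c1) t w <= disc_int X r (fun y => f y - c2) t w.
Proof.
move=> c21; rewrite /disc_int /Rintegral.
pose D := (`[0, t]%classic : set R).
have mu_fin : (lebesgue_measure D < +oo)%E.
  rewrite /D lebesgue_measure_itv /=; case: ifP => _; last exact: ltey.
  by rewrite -EFinB ltey.
have ebd s : `|expR (- alpha X r s w)| <= 1.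
  by rewrite ger0_norm ?expR_ge0 // expR_le1 oppr_le0 alpha_ge0.
have bd c s : `|expR (- alpha X r s w) * (f (X s w) - c)| <= fb + `|c|.
  rewrite normrM -[X in _ <= X]mul1r; apply: ler_pM => //.
  by apply: le_trans (ler_normB _ _) _; rewrite lerD2r.
apply: fine_le.
- by apply: (@int_bdd_fin _ _ _ _ _ _ (fb + `|c1|)) => // s _; exact: bd.
- by apply: (@int_bdd_fin _ _ _ _ _ _ (fb + `|c2|)) => // s _; exact: bd.
rewrite [X in (X <= _)%E]integral_mkcond [X in (_ <= X)%E]integral_mkcond.
apply: gen_mono => s; rewrite /patch; case: ifP => // _.
rewrite lee_fin; apply: ler_wpM2l; first exact: expR_ge0.
by rewrite lerD2l lerN2.
Qed.

Lemma limf_esup_le (R : realType) (h : R -> \bar R) (B : \bar R) :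
  (forall T, 0 <= T -> (h T <= B)%E) -> (limf_esup h (pinfty_nbhs R) <= B)%E.
Proof.
move=> hB; rewrite limf_esupE.
apply: (le_trans (ereal_inf_lbound _)).
  exists [set T | 0 <= T] => //.
  by exists 0; split => // y /ltW.
by apply: ge_ereal_sup => _ [T hT <-]; exact: hB.
Qed.
Theorem lemma3p10 (R : realType) (E : pmetricType R)
  (E_lc : locally_compact [set: E]) (E_sep : separable E)
  (E_balls : closed_balls_compact E)
  (d : measure_display) (Om : measurableType d)
  (F : R -> set (set Om)) (X : R -> Om -> E) (P : E -> probability Om R)
  (mu : probability (borelT E) R)
  (HX : standard_markov F X P) (Hfeller : weak_feller X P)
  (Herg : ergodic X P mu)
  (f r : E -> R)
  (f_cont : continuous f) (f_bdd : bdd f)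
  (r_cont : continuous r) (r_bdd : bdd r) (r_ge0 : forall y, 0 <= r y)
  (q : E -> R)
  (* (C1') q_r is a (real-valued) continuous function, bounded from below *)
  (C1_q : forall x, q_r X P mu r f x = (q x)%:E)
  (C1_cont : continuous q) (C1_lb : exists m : R, forall y, m <= q y)
  (* (C2') *)
  (C2 : forall (sigma : Om -> \bar R) (x : E),
     stopping_time F sigma -> (exists M : R, forall w, (sigma w <= M%:E)%E) ->
     (q x)%:E = Ex (P x) (fun w =>
        disc_int X r (fun y => f y - mu_of mu f) (fine (sigma w)) w
        + expR (- alpha X r (fine (sigma w)) w) * q (X (fine (sigma w)) w)))
  (* (C3) *)
  (C3 : mu_of mu f < 0)
  (dfun : E -> R) (Hd : forall x, mu_of mu f < dfun x < 0) :
  forall x : E,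
    (gamma_r F X P r f (dfun x) x < +oo)%E /\
    (gamma_r F X P r f (dfun x) x
       <= (q x - Order.min 0 (inf (range q)))%:E)%E.
Proof.
move=> x.
set m0 := Order.min 0 (inf (range q)).
have m0le0 : m0 <= 0 by rewrite /m0 ge_min lexx.
have qlb : forall y, m0 <= q y.
  move=> y; rewrite /m0 ge_min; apply/orP; right.
  apply: ge_inf; last by exists y.
  by case: C1_lb => m hm; exists m => _ [z _ <-]; exact: hm.
case: f_bdd => fb hfb.
case/andP: (Hd x) => hd1 hd2.
have key : (gamma_r F X P r f (dfun x) x <= (q x - m0)%:E)%E.
  rewrite /gamma_r; apply: ge_ereal_sup => _ [tau htau <-].
  apply: limf_esup_le => T T0.
  set sigma := fun w => Order.min (tau w) T%:E.
  have hst : stopping_time F sigma.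
    case: htau => tau0 tauF; split.
      by move=> w; rewrite /sigma le_min tau0 lee_fin T0.
    move=> t t0.
    case: HX => [[sa _ _] _].
    case: (lerP T t) => Tt.
      have -> : [set w | (sigma w <= t%:E)%E] = setT.
        by apply/seteqP; split => // w _ /=; rewrite /sigma ge_min lee_fin Tt orbT.
      by case: (sa t) => s0 sC _; have := sC set0 s0; rewrite setD0.
    have -> : [set w | (sigma w <= t%:E)%E] = [set w | (tau w <= t%:E)%E].
      by apply/seteqP; split => w /=; rewrite /sigma ge_min lee_fin (leNgt T t) Tt orbF.
    exact: tauF.
  have hbd : exists M : R, forall w, (sigma w <= M%:E)%E.
    by exists T => w; rewrite /sigma ge_min lexx orbT.
  have C := C2 sigma x hst hbd.
  rewrite /Ex in C *.
  apply: (@le_trans _ _ (\int[P x]_w ((disc_int X r (fun y => f y - mu_of mu f)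
     (fine (sigma w)) w + expR (- alpha X r (fine (sigma w)) w)
       * q (X (fine (sigma w)) w)) + - m0)%:E)%E).
    apply: gen_mono => w; rewrite lee_fin.
    have h1 := @disc_mono _ _ _ _ X r f r_ge0 fb hfb (dfun x) (mu_of mu f)
      (fine (sigma w)) w (ltW hd1).
    have hal := @alpha_ge0 _ _ _ _ X r r_ge0 (fine (sigma w)) w.
    set e := expR (- alpha X r (fine (sigma w)) w).
    have e0 : 0 < e := expR_gt0 _.
    have e1 : e <= 1 by rewrite expR_le1 oppr_le0.
    have hq := qlb (X (fine (sigma w)) w).
    rewrite -/(sigma w).
    set v := q (X (fine (sigma w)) w) in hq *.
    have ev : m0 <= e * v.
      case: (lerP 0 v) => hv.
        by apply: le_trans m0le0 _; exact: mulr_ge0 (ltW e0) hv.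
      apply: le_trans hq _; nra.
    lra.
  apply: le_trans (@int_shift _ _ _ (P x) _ (- m0) _) _; first by rewrite oppr_ge0.
  by rewrite -C -EFinD.
split => //; apply: le_lt_trans key _; exact: ltey.
Qed.
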